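(* Let $N\ge1$, $f:\mathbb{N}^N\to\mathbb{N}$, $p$ a prime and $n\ge1$. Let $U=\{\mathbf{x}\in\mathbb{N}^N:\mathbf{x}\ne\mathbf{0},\ x_i\in\{0,1\}\ \forall i\}$ and $h(\mathbf{s})=f(\mathbf{s})^p$ for $\mathbf{s}\in U$, $h(\mathbf{s})=0$ otherwise. Then $$\binom{pn}{p\mathbf{1}}_f\equiv\sum_{k=1}^{n}\ \sum_{\{\mathbf{b}_1,\dots,\mathbf{b}_k\}}\frac{(pn)!}{(p!)^k\,(p(n-k))!}\,f(\mathbf{0})^{p(n-k)}\,h(\mathbf{b}_1)\cdots h(\mathbf{b}_k)\pmod{pn},$$ where the inner sum runs over all vector partitions $\{\mathbf{b}_1,\dots,\mathbf{b}_k\}$ of $\mathbf{1}=(1,\dots,1)\in\mathbb{N}^N$ into $k$ non-zero parts (terms with $k>N$ are absent).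
   Context: $\mathbb{N}=\{0,1,2,\dots\}$. A vector partition of $\mathbf{1}$ into $k$ non-zero parts is a multiset of $k$ non-zero vectors in $\mathbb{N}^N$ summing to $\mathbf{1}$. For $k\ge0$ and $\mathbf{x}\in\mathbb{N}^N$, $\binom{k}{\mathbf{x}}_f=\sum_{\mathbf{m}_1+\cdots+\mathbf{m}_k=\mathbf{x}} f(\mathbf{m}_1)\cdots f(\mathbf{m}_k)$ over tuples of vectors in $\mathbb{N}^N$. Convention $0^0=1$. *)

(* Defs.v *)
From mathcomp Require Import all_boot.
Set Implicit Arguments. Unset Strict Implicit. Unset Printing Implicit Defensive.

Definition vec (N : nat) := {ffun 'I_N -> nat}.

(* binom(k, x)_f = sum over k-tuples (m_1,...,m_k) of vectors with
   m_1 + ... + m_k = x of f(m_1)...f(m_k).  Every such m_j satisfies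
   m_j(i) <= x(i) <= max_i x(i) =: B, so we range over tuples of vectors with
   entries in 'I_(B+1); this loses no tuple. *)
Definition binomf (N : nat) (f : vec N -> nat) (k : nat) (x : vec N) : nat :=
  \sum_(m : {ffun 'I_k -> {ffun 'I_N -> 'I_(\max_(i < N) x i).+1}}
          | [forall i : 'I_N, \sum_(j < k) (m j i : nat) == x i])
     \prod_(j < k) f [ffun i => (m j i : nat)].

Definition hfun (N p : nat) (f : vec N -> nat) (s : vec N) : nat :=
  if (s != [ffun _ => 0]) && [forall i, s i <= 1] then f s ^ p else 0.

Definition vec_of01 (N : nat) (b : {ffun 'I_N -> 'I_2}) : vec N :=
  [ffun i => (b i : nat)].

(* A vector partition is a multiset,
   encoded by its multiplicity function mu; every part of a partition of 1
   has entries in {0,1}, so mu ranges over functions on {0,1}-vectors. *)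
Definition vpart_sum (N k : nat) (g : vec N -> nat) : nat :=
  \sum_(mu : {ffun {ffun 'I_N -> 'I_2} -> 'I_k.+1}
          | [&& \sum_(b : {ffun 'I_N -> 'I_2}) (mu b : nat) == k,
                (mu [ffun _ => (ord0 : 'I_2)] : nat) == 0
              & [forall i : 'I_N,
                   \sum_(b : {ffun 'I_N -> 'I_2}) (mu b : nat) * (b i : nat) == 1]])
     \prod_(b : {ffun 'I_N -> 'I_2}) g (vec_of01 b) ^ (mu b : nat).

(* Main.v *)
Require Import Defs.
From mathcomp Require Import all_boot.
From mathcomp Require Import zify.
Set Implicit Arguments. Unset Strict Implicit. Unset Printing Implicit Defensive.

Section Count.
Variable V : finType.

Definition cnt K (m : {ffun 'I_K -> V}) (v : V) : nat := \sum_(j < K) (m j == v).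
Definition Sn K (c : V -> nat) : nat :=
  \sum_(m : {ffun 'I_K -> V}) [forall v, cnt m v == c v].

Lemma sum_ind1 (v : V) : \sum_(w : V) (v == w) = 1.
Proof.
rewrite (bigD1 v) //= eqxx big1 // => w /negbTE; by rewrite eq_sym => ->.
Qed.

Lemma cnt_sum K (m : {ffun 'I_K -> V}) : \sum_v cnt m v = K.
Proof.
rewrite /cnt exchange_big /=.
rewrite (eq_bigr (fun _ => 1)) => [|j _]; last exact: sum_ind1.
by rewrite sum1_card card_ord.
Qed.

Lemma cnt_le K (m : {ffun 'I_K -> V}) v : cnt m v <= K.
Proof. by rewrite -{2}(cnt_sum m) (bigD1 v) //= leq_addr. Qed.

Lemma cnt_sumw K (m : {ffun 'I_K -> V}) (F : V -> nat) :
  \sum_(j < K) F (m j) = \sum_v cnt m v * F v.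
Proof.
rewrite /cnt; under [RHS]eq_bigr => v _ do rewrite big_distrl /=.
rewrite exchange_big /=; apply: eq_bigr => j _.
rewrite (bigD1 (m j)) //= eqxx mul1n big1 ?addn0 // => w /negbTE.
by rewrite eq_sym => ->.
Qed.

Lemma cnt_prod K (m : {ffun 'I_K -> V}) (F : V -> nat) :
  \prod_(j < K) F (m j) = \prod_v F v ^ cnt m v.
Proof.
rewrite /cnt; under [RHS]eq_bigr => v _ do
  rewrite (big_morph _ (expnD (F v)) (expn0 (F v))).
rewrite exchange_big /=; apply: eq_bigr => j _.
rewrite (bigD1 (m j)) //= eqxx expn1 big1 ?muln1 // => w /negbTE.
by rewrite eq_sym => ->.
Qed.

Definition fcons K (v : V) (m : {ffun 'I_K -> V}) : {ffun 'I_K.+1 -> V} :=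
  [ffun j => if unlift ord0 j is Some j' then m j' else v].
Definition ftail K (m : {ffun 'I_K.+1 -> V}) : {ffun 'I_K -> V} :=
  [ffun j => m (lift ord0 j)].

Lemma sum_fcons K (Phi : {ffun 'I_K.+1 -> V} -> nat) :
  \sum_m Phi m = \sum_v \sum_(m' : {ffun 'I_K -> V}) Phi (fcons v m').
Proof.
rewrite pair_big /=.
rewrite (reindex (fun x : V * {ffun 'I_K -> V} => fcons x.1 x.2)) //=.
exists (fun m : {ffun 'I_K.+1 -> V} => (m ord0, ftail m)) => [[v m'] _|m _] /=.
  congr (_, _); first by rewrite ffunE unlift_none.
  by apply/ffunP => j; rewrite !ffunE liftK.
apply/ffunP => j; rewrite !ffunE; case: unliftP => [j'|] -> //.
by rewrite ffunE.
Qed.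

Lemma cnt_fcons K v (m : {ffun 'I_K -> V}) w :
  cnt (fcons v m) w = (v == w) + cnt m w.
Proof.
rewrite /cnt big_ord_recl ffunE unlift_none; congr (_ + _).
by apply: eq_bigr => j _; rewrite ffunE liftK.
Qed.

Lemma prod_fact_split (c : V -> nat) v : 0 < c v ->
  \prod_w (c w)`! = c v * \prod_w (c w - (v == w))`!.
Proof.
move=> hv; rewrite (bigD1 v) //= [in RHS](bigD1 v) //= eqxx subn1.
rewrite mulnA; congr (_ * _); first by case: (c v) hv.
by apply: eq_bigr => w hw; rewrite eq_sym (negbTE hw) subn0.
Qed.

Lemma sum_split (c : V -> nat) v : 0 < c v ->
  \sum_w (c w - (v == w)) = (\sum_w c w).-1.
Proof.
move=> hv; rewrite (bigD1 v) //= [in RHS](bigD1 v) //= eqxx.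
rewrite (eq_bigr (fun w => c w)); last first.
  by move=> w hw; rewrite eq_sym (negbTE hw) subn0.
lia.
Qed.

Lemma Sn_rec K (c : V -> nat) v : 0 < c v ->
  \sum_(m' : {ffun 'I_K -> V}) [forall w, cnt (fcons v m') w == c w] =
  Sn K (fun w => c w - (v == w)).
Proof.
move=> hv; apply: eq_bigr => m' _; congr (nat_of_bool _).
apply: eq_forallb => w; rewrite cnt_fcons.
case: (v =P w) => [<-|_] /=; apply/eqP/eqP; lia.
Qed.

Lemma Sn_rec0 K (c : V -> nat) v : c v = 0 ->
  \sum_(m' : {ffun 'I_K -> V}) [forall w, cnt (fcons v m') w == c w] = 0.
Proof.
move=> hv; apply: big1 => m' _.
case: forallP => // /(_ v); rewrite cnt_fcons eqxx hv.
by rewrite add1n.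
Qed.

Lemma Sn_multinom K (c : V -> nat) : \sum_v c v = K ->
  Sn K c * \prod_v (c v)`! = K`!.
Proof.
elim: K c => [|K IH] c hc.
  have c0 : forall v, c v = 0.
    by move=> v; move/eqP: hc; rewrite sum_nat_eq0 => /forallP /(_ v) /eqP.
  rewrite big1 ?muln1; last by move=> v _; rewrite c0.
  rewrite /Sn (eq_bigr (fun _ => 1)); first by rewrite sum1_card card_ffun card_ord.
  move=> m _; case: forallP => // [[]] v.
  by rewrite /cnt big_ord0 c0.
rewrite /Sn sum_fcons big_distrl /=.
rewrite (eq_bigr (fun v => c v * K`!)).
  by rewrite -big_distrl /= hc factS.
move=> v _; case: (posnP (c v)) => hv.
  by rewrite Sn_rec0 // hv.
rewrite Sn_rec // (prod_fact_split hv) mulnCA IH //.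
by rewrite sum_split // hc.
Qed.

Lemma Sn_gt0_sum K (c : V -> nat) : 0 < Sn K c -> \sum_v c v = K.
Proof.
case: (boolP [exists m : {ffun 'I_K -> V}, [forall v, cnt m v == c v]]).
  case/existsP => m /forallP H _.
  by rewrite -(cnt_sum m); apply: eq_bigr => v _; rewrite (eqP (H v)).
move/existsPn => H; rewrite /Sn big1 // => m _.
by rewrite (negbTE (H m)).
Qed.

Lemma Sn_dvd K (c : V -> nat) v : \sum_w c w = K -> K %| c v * Sn K c.
Proof.
move=> hc; case: (posnP (c v)) => hv; first by rewrite hv mul0n dvdn0.
have hK : 0 < K.
  by rewrite -hc (bigD1 v) //=; apply: leq_trans hv (leq_addr _ _).
have := Sn_multinom hc.
rewrite (prod_fact_split hv).
have := @Sn_multinom K.-1 (fun w => c w - (v == w)).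
rewrite sum_split // hc => /(_ erefl) H2.
rewrite -(prednK hK) factS -H2 prednK // mulnCA !mulnA.
move/eqP; rewrite eqn_pmul2r; last by apply: prodn_gt0 => w; apply: fact_gt0.
move/eqP => ->; exact: dvdn_mulr.
Qed.

Lemma Sn_dvd_gcd K (c : V -> nat) : \sum_w c w = K ->
  K %| (\big[gcdn/0]_w c w) * Sn K c.
Proof.
move=> hc; apply: (big_ind (fun x => K %| x * Sn K c)).
- by rewrite mul0n dvdn0.
- by move=> x y hx hy; rewrite muln_gcdl dvdn_gcd hx hy.
- by move=> w _; exact: Sn_dvd.
Qed.

End Count.

Section Main.
Variables (N p n B : nat) (f : vec N -> nat).
Hypotheses (hN : 0 < N) (hp : prime p) (hn : 0 < n) (hB : 0 < B).
Local Notation K := (p * n).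
Local Notation V := {ffun 'I_N -> 'I_B.+1}.
Local Notation B2 := {ffun 'I_N -> 'I_2}.

Definition ev (v : V) : vec N := [ffun i => (v i : nat)].
Definition is01 (v : V) := [forall i, (v i : nat) <= 1].
Definition zeroV : V := [ffun _ => ord0].
Definition zero2 : B2 := [ffun _ => ord0].
Definition e (b : B2) : V := [ffun i => inord (b i)].
Definition d (v : V) : B2 := [ffun i => inord (v i)].
Definition kk (mu : {ffun B2 -> 'I_2}) := \sum_b (mu b : nat).
Definition phin (mu : {ffun B2 -> 'I_2}) (v : V) : nat :=
  if v == zeroV then K - p * kk mu else if is01 v then p * mu (d v) else 0.
Definition phi (mu : {ffun B2 -> 'I_2}) : {ffun V -> 'I_K.+1} :=
  [ffun v => inord (phin mu v)].
Definition psi (c : {ffun V -> 'I_K.+1}) : {ffun B2 -> 'I_2} :=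
  [ffun b => if b == zero2 then ord0 else inord (c (e b) %/ p)].

Lemma p_gt0 : 0 < p. Proof. exact: prime_gt0. Qed.
Lemma p_gt1 : 1 < p. Proof. exact: prime_gt1. Qed.

Lemma eE b i : (e b i : nat) = b i.
Proof. by rewrite ffunE inordK // ltnS; apply: leq_trans hB; rewrite -ltnS. Qed.

Lemma dE v i : is01 v -> (d v i : nat) = v i.
Proof. by move=> /forallP /(_ i) h; rewrite ffunE inordK. Qed.

Lemma e01 b : is01 (e b).
Proof. by apply/forallP => i; rewrite eE -ltnS. Qed.

Lemma deK b : d (e b) = b.
Proof. by apply/ffunP => i; apply: val_inj; rewrite /= dE ?e01 // eE. Qed.

Lemma edK v : is01 v -> e (d v) = v.
Proof. by move=> h; apply/ffunP => i; apply: val_inj; rewrite /= eE dE. Qed.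

Lemma e0 : e zero2 = zeroV.
Proof. by apply/ffunP => i; apply: val_inj; rewrite /= eE !ffunE. Qed.

Lemma e_neq0 b : b != zero2 -> e b != zeroV.
Proof. by apply: contra => /eqP h; rewrite -(deK b) h -e0 deK. Qed.

Lemma bigV01 (R : Type) (idx : R) (op : Monoid.com_law idx) (F : V -> R) :
  (forall v, ~~ is01 v -> F v = idx) ->
  \big[op/idx]_v F v = \big[op/idx]_b F (e b).
Proof.
move=> H; rewrite (bigID is01) /= [X in op _ X]big1 ?Monoid.mulm1; last first.
  by move=> v /H.
rewrite (reindex_onto e d); last by move=> v; exact: edK.
by apply: eq_bigl => b; rewrite e01 deK eqxx.
Qed.

Lemma phinE mu v : (phi mu v : nat) = phin mu v.
Proof.
rewrite ffunE inordK // ltnS /phin; case: ifP => _; first exact: leq_subr.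
case: ifP => _ //; apply: leq_mul => //; by case: (mu (d v)) => [[|[|]]].
Qed.

Lemma phin_e mu b : b != zero2 -> phin mu (e b) = p * mu b.
Proof. by move=> hb; rewrite /phin (negbTE (e_neq0 hb)) e01 deK. Qed.

Lemma phi_big (R : Type) (idx : R) (op : Monoid.com_law idx) (F : V -> nat -> R) mu :
  (forall v, F v 0 = idx) ->
  \big[op/idx]_v F v (phin mu v) =
  op (F zeroV (K - p * kk mu)) (\big[op/idx]_(b | b != zero2) F (e b) (p * mu b)).
Proof.
move=> H0; rewrite (@bigV01 _ _ op (fun v => F v (phin mu v))); last first.
  move=> v h01; rewrite /phin (negbTE h01); case: ifP => // /eqP hv.
  by move: h01; rewrite hv -e0 e01.
rewrite (bigD1 zero2) //= e0 {1}/phin eqxx; congr (op _ _).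
by apply: eq_bigr => b hb; rewrite phin_e.
Qed.


Definition Qc (c : V -> nat) := [forall i, \sum_v c v * v i == p].
Definition good (c : V -> nat) := [forall v, p %| c v].

Lemma le_big (I : finType) (F : I -> nat) i : F i <= \sum_j F j.
Proof. by rewrite (bigD1 i) //= leq_addr. Qed.

Lemma non01_0 (c : V -> nat) v : Qc c -> good c -> ~~ is01 v -> c v = 0.
Proof.
move=> /forallP hQ /forallP hg /forallPn [i]; rewrite -ltnNge => hi.
have := le_big (fun w => c w * w i) v; rewrite (eqP (hQ i)) /= => hle.
move: (divnK (hg v)) => hc; rewrite -hc in hle *.
move: hle hi; have := p_gt1; move: (c v %/ p) (v i : nat) => a x; move=> hp1 h hx; case: a h => [|a] h; first by []. have : p * x <= p by apply: leq_trans h; rewrite -mulnA leq_pmull. nia.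
Qed.

Lemma nz_one (v : V) : is01 v -> v != zeroV -> exists i, (v i : nat) = 1.
Proof.
move=> /forallP h01 hv; case: (boolP [exists i, (v i : nat) == 1]).
  by case/existsP => i /eqP; exists i.
move/existsPn => H; case/eqP: hv; apply/ffunP => i; apply: val_inj.
rewrite ffunE /=; have := h01 i; have := H i; case: (v i) => [[|[|]]] //.
Qed.

Lemma in01_val (c : V -> nat) v : Qc c -> good c -> is01 v -> v != zeroV ->
  c v = p * (c v %/ p) /\ c v %/ p <= 1.
Proof.
move=> /forallP hQ /forallP hg h01 hv; have [i hi] := nz_one h01 hv.
have := le_big (fun w => c w * w i) v; rewrite (eqP (hQ i)) /= hi muln1 => hle.
move: (divnK (hg v)) => hc; split; first by rewrite mulnC hc.
rewrite -hc in hle; move: hle; have := p_gt0; move: (c v %/ p) => a; nia.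
Qed.

Lemma psi_val (c : {ffun V -> 'I_K.+1}) b :
  Qc (fun v => c v) -> good (fun v => c v) -> b != zero2 ->
  (c (e b) : nat) = p * psi c b.
Proof.
move=> hQ hg hb; have [h1 h2] := in01_val hQ hg (e01 b) (e_neq0 hb).
by rewrite ffunE (negbTE hb) inordK.
Qed.

Lemma kk_psi0 (mu : {ffun B2 -> 'I_2}) :
  kk mu = mu zero2 + \sum_(b | b != zero2) (mu b : nat).
Proof. by rewrite /kk (bigD1 zero2). Qed.

Lemma sum_c01 (c : {ffun V -> 'I_K.+1}) : Qc (fun v => c v) -> good (fun v => c v) ->
  \sum_v (c v : nat) = c zeroV + p * kk (psi c).
Proof.
move=> hQ hg; rewrite (@bigV01 _ _ _ (fun v => (c v : nat))); last first.
  by move=> v; exact: (@non01_0 (fun v => c v) v hQ hg).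
rewrite (bigD1 zero2) //= e0 kk_psi0 ffunE eqxx add0n big_distrr /=.
by congr (_ + _); apply: eq_bigr => b hb; rewrite psi_val.
Qed.

Lemma psi_phi (c : {ffun V -> 'I_K.+1}) :
  good (fun v => c v) -> Qc (fun v => c v) -> \sum_v (c v : nat) = K ->
  phi (psi c) = c.
Proof.
move=> hg hQ hK; apply/ffunP => v; apply: val_inj; rewrite /= phinE /phin.
case: ifP => [/eqP ->|hv0].
  by move: hK; rewrite sum_c01 //; lia.
case: ifP => h01; last by rewrite (@non01_0 (fun v => c v) v hQ hg) // h01.
have hd : d v != zero2.
  by apply: contraFN hv0 => /eqP h; rewrite -(edK h01) h e0.
by rewrite -psi_val // edK.
Qed.


Definition cond (mu : {ffun B2 -> 'I_2}) :=
  ((mu zero2 : nat) == 0) && [forall i, \sum_b (mu b : nat) * (b i : nat) == 1].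
Definition Rm mu := cond mu && (1 <= kk mu <= n).
Definition Pc (c : {ffun V -> 'I_K.+1}) :=
  [&& good (fun v => c v), Qc (fun v => c v) & \sum_v (c v : nat) == K].

Lemma sum_phi mu : \sum_v (phi mu v : nat) = (K - p * kk mu) + p * (kk mu - mu zero2).
Proof.
under eq_bigr => v _ do rewrite phinE.
rewrite (@phi_big _ _ _ (fun _ x => x)) // -big_distrr /= kk_psi0.
by rewrite addKn.
Qed.

Lemma Qsum_phi mu i : \sum_v (phi mu v : nat) * (v i : nat) =
  p * \sum_b (mu b : nat) * (b i : nat).
Proof.
under eq_bigr => v _ do rewrite phinE.
rewrite (@phi_big _ _ _ (fun v x => x * (v i : nat))) // /= ffunE muln0 add0n.
rewrite [in RHS](bigD1 zero2) //= ffunE muln0 add0n big_distrr /=.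
by apply: eq_bigr => b _; rewrite eE mulnA.
Qed.

Lemma good_phi mu : good (fun v => phi mu v).
Proof.
apply/forallP => v; rewrite /= phinE /phin.
case: ifP => _; first by rewrite -mulnBr dvdn_mulr.
by case: ifP => _ //; rewrite dvdn_mulr.
Qed.

Lemma psi_phi_eq mu : (psi (phi mu) == mu) = ((mu zero2 : nat) == 0).
Proof.
apply/eqP/eqP => [<-|h0]; first by rewrite ffunE eqxx.
apply/ffunP => b; apply: val_inj; rewrite ffunE; case: ifP => [/eqP ->|hb] /=.
  by rewrite h0.
by rewrite phinE phin_e ?hb // mulKn ?p_gt0 // inordK // ltnS; case: (mu b) => [[|[|]]].
Qed.

Lemma kk_ge (mu : {ffun B2 -> 'I_2}) i : \sum_b (mu b : nat) * (b i : nat) <= kk mu.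
Proof.
apply: leq_sum => b _.
by case: (b i) => [[|[|]]] //= _; rewrite ?muln0 ?muln1.
Qed.

Lemma Pc_phi mu : Pc (phi mu) && (psi (phi mu) == mu) = Rm mu.
Proof.
rewrite /Pc good_phi psi_phi_eq sum_phi /Rm /cond /=.
case: (nat_of_ord (mu zero2) =P 0) => h0 /=; last by rewrite !andbF.
rewrite /Qc h0 subn0 andbT.
have -> : [forall i, \sum_v (phi mu v : nat) * (v i : nat) == p] =
          [forall i, \sum_b (mu b : nat) * (b i : nat) == 1].
  apply: eq_forallb => i; rewrite Qsum_phi -{2}(muln1 p) eqn_pmul2l //.
  exact: p_gt0.
case: forallP => /= H; last by [].
have i0 : 'I_N by exact: Ordinal hN.
have k1 : 0 < kk mu by have := kk_ge mu i0; rewrite (eqP (H i0)).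
rewrite k1 /=; have := p_gt0 => hp0; apply/eqP/idP => h.
  have : p * kk mu <= p * n by lia. by rewrite leq_mul2l (gtn_eqF hp0).
 have : p * kk mu <= p * n by rewrite leq_mul2l h orbT.
lia.
Qed.


Definition G (c : V -> nat) := \prod_v f (ev v) ^ c v.
Definition T (mu : {ffun B2 -> 'I_2}) :=
  (K`! %/ ((p`!) ^ kk mu * (p * (n - kk mu))`!))
       * f [ffun _ => 0] ^ (p * (n - kk mu))
       * \prod_b hfun p f (vec_of01 b) ^ mu b.

Lemma ev_e b : ev (e b) = vec_of01 b.
Proof. by apply/ffunP => i; rewrite !ffunE inordK // ltnS; apply: leq_trans hB; rewrite -ltnS. Qed.

Lemma ev0 : ev zeroV = [ffun _ => 0].
Proof. by apply/ffunP => i; rewrite !ffunE. Qed.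

Lemma hfun_nz b : b != zero2 -> hfun p f (vec_of01 b) = f (vec_of01 b) ^ p.
Proof.
move=> hb; rewrite /hfun; case: ifP => // /negbT; rewrite negb_and negbK.
case/orP => [/eqP h|/forallPn [i]]; last by rewrite ffunE; case: (b i) => [[|[|]]].
case/eqP: hb; apply/ffunP => i; apply: val_inj.
by move/ffunP: h => /(_ i); rewrite !ffunE.
Qed.

Lemma prod_pow (I : finType) (P : pred I) (a : nat) (F : I -> nat) :
  \prod_(i | P i) a ^ F i = a ^ (\sum_(i | P i) F i).
Proof. by rewrite (big_morph _ (expnD a) (expn0 a)). Qed.

Lemma W_phi mu : Rm mu -> Sn K (fun v => phi mu v) * G (fun v => phi mu v) = T mu.
Proof.
move=> /andP [/andP [/eqP h0 _] /andP [k1 kn]].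
have hpk : p * kk mu <= K by rewrite leq_mul2l kn orbT.
have hs : \sum_v (phi mu v : nat) = K by rewrite sum_phi h0 subn0 subnK.
have hkk : \sum_(b | b != zero2) (mu b : nat) = kk mu by rewrite kk_psi0 h0.
have hP : \prod_v (phi mu v)`! = (p`!) ^ kk mu * (p * (n - kk mu))`!.
  under eq_bigr => v _ do rewrite phinE.
  rewrite (@phi_big _ _ _ (fun _ x => x`!)) //= mulnC mulnBr; congr (_ * _).
  rewrite -hkk -prod_pow; apply: eq_bigr => b _.
  by case: (mu b) => [[|[|]]] //=; rewrite ?muln0 ?muln1 ?expn1.
have hS : Sn K (fun v => phi mu v) = K`! %/ ((p`!) ^ kk mu * (p * (n - kk mu))`!).
  rewrite -(Sn_multinom hs) hP mulnK //.
  by rewrite muln_gt0 expn_gt0 !fact_gt0.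
rewrite /T hS -!mulnA; congr (_ * _).
rewrite /G; under eq_bigr => v _ do rewrite phinE.
rewrite (@phi_big _ _ _ (fun v x => f (ev v) ^ x)) //= ev0 mulnBr; congr (_ * _).
rewrite [in RHS](bigD1 zero2) //= h0 expn0 mul1n; apply: eq_bigr => b hb.
by rewrite ev_e hfun_nz // expnM.
Qed.


Definition GS := \sum_(c : {ffun V -> 'I_K.+1} | Pc c) Sn K (fun v => c v) * G (fun v => c v).

Lemma GS_eq : GS = \sum_(mu | Rm mu) T mu.
Proof.
rewrite /GS (reindex_onto phi psi); last first.
  by move=> c /and3P [hg hQ /eqP hs]; exact: psi_phi.
apply: eq_big => mu; first exact: Pc_phi.
by rewrite Pc_phi => /W_phi.
Qed.

Lemma nz_one2 (b : B2) : b != zero2 -> exists i, (b i : nat) = 1.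
Proof.
move=> hb; case: (boolP [exists i, (b i : nat) == 1]).
  by case/existsP => i /eqP; exists i.
move/existsPn => H; case/eqP: hb; apply/ffunP => i; apply: val_inj.
rewrite ffunE /=; have := H i; case: (b i) => [[|[|]]] //.
Qed.

Lemma vpart_conv k (g : vec N -> nat) : 0 < k ->
  vpart_sum k g = \sum_(mu : {ffun B2 -> 'I_2} | cond mu && (kk mu == k))
                    \prod_b g (vec_of01 b) ^ mu b.
Proof.
move=> k0; rewrite /vpart_sum.
rewrite (reindex_onto (fun mu : {ffun B2 -> 'I_2} => [ffun b => inord (mu b) : 'I_k.+1])
                      (fun c : {ffun B2 -> 'I_k.+1} => [ffun b => inord (c b) : 'I_2])); last first.
  move=> c /and3P [_ /eqP h0 /forallP h1]; apply/ffunP => b; apply: val_inj.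
  have cb1 : (c b : nat) <= 1.
    case: (b =P zero2) => [->|/eqP hb]; first by rewrite h0.
    have [i hi] := nz_one2 hb.
    by have := le_big (fun b' => (c b' : nat) * (b' i : nat)) b; rewrite /= hi muln1 (eqP (h1 i)).
  by rewrite !ffunE /= inordK inordK // ltnS; apply: leq_trans cb1 _.
have hv : forall (mu : {ffun B2 -> 'I_2}) b, ([ffun b => inord (mu b) : 'I_k.+1] b : nat) = mu b.
  by move=> mu b; rewrite ffunE inordK // ltnS; apply: leq_trans k0; case: (mu b) => [[|[|]]].
apply: eq_big => [mu|mu _]; last by apply: eq_bigr => b _; rewrite hv.
have -> : [ffun b => inord ([ffun b0 => inord (mu b0) : 'I_k.+1] b) : 'I_2] = mu.
  by apply/ffunP => b; apply: val_inj; rewrite ffunE /= hv inordK.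
rewrite eqxx andbT /cond /kk.
rewrite (eq_bigr (fun b => (mu b : nat))); last by move=> b _; rewrite hv.
rewrite hv andbC; congr (_ && _); congr (_ && _); apply: eq_forallb => i.
by rewrite (eq_bigr (fun b => (mu b : nat) * (b i : nat))) // => b _; rewrite hv.
Qed.

Lemma sum_ind_range (a x m : nat) :
  \sum_(1 <= k < m.+1) (if a == k then x else 0) = if 1 <= a <= m then x else 0.
Proof.
elim: m => [|m IH]; first by rewrite big_geq //; case: a => [|[|]].
rewrite big_nat_recr //= IH.
case: (a =P m.+1) => [->|h]; first by rewrite ltnn andbF leqnn.
case: ifP => h1; case: ifP => h2; rewrite ?addn0 //; exfalso; move: h1 h2 h; lia.
Qed.


Lemma RHS_eq :
  \sum_(1 <= k < n.+1)
     ((K`! %/ ((p`!) ^ k * (p * (n - k))`!))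
       * f [ffun _ => 0] ^ (p * (n - k)) * vpart_sum k (hfun p f))
  = \sum_(mu | Rm mu) T mu.
Proof.
rewrite (eq_big_nat _ _ (F2 := fun k => \sum_(mu | cond mu) (if kk mu == k then T mu else 0))); last first.
  move=> k /andP [k1 _]; rewrite vpart_conv // big_distrr /= big_mkcondr /=.
  apply: eq_bigr => mu _; case: eqP => // <-.
  by [].
rewrite exchange_big /Rm [in RHS]big_mkcondr; apply: eq_bigr => mu _.
by rewrite sum_ind_range.
Qed.

Definition key (m : {ffun 'I_K -> V}) : {ffun V -> 'I_K.+1} :=
  [ffun v => inord (cnt m v)].

Lemma keyE m v : (key m v : nat) = cnt m v.
Proof. by rewrite ffunE inordK // ltnS cnt_le. Qed.

Lemma LHS_eq :
  \sum_(m : {ffun 'I_K -> V} | [forall i, \sum_(j < K) (m j i : nat) == p])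
     \prod_(j < K) f [ffun i => (m j i : nat)]
  = \sum_(c : {ffun V -> 'I_K.+1})
      Sn K (fun v => c v) * (if Qc (fun v => c v) then G (fun v => c v) else 0).
Proof.
rewrite big_mkcond /=.
rewrite (eq_bigr (fun m => if Qc (fun v => key m v) then G (fun v => key m v) else 0)); last first.
  move=> m _; congr (if _ then _ else _).
    apply: eq_forallb => i; rewrite (cnt_sumw m (fun v => (v i : nat))).
    by under [in RHS]eq_bigr => v _ do rewrite keyE.
  rewrite (cnt_prod m (fun v => f (ev v))) /G.
  by apply: eq_bigr => v _; rewrite keyE.
rewrite (partition_big key xpredT) //=; apply: eq_bigr => c _.
rewrite (eq_bigr (fun m => (key m == c) * (if Qc (fun v => c v) then G (fun v => c v) else 0))); last first.
  by move=> m /eqP ->; rewrite eqxx mul1n.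
rewrite -big_distrl /=; congr (_ * _).
have hk : forall (m : {ffun 'I_K -> V}) c, (key m == c) = [forall v, cnt m v == c v].
  move=> m c'; apply/eqP/forallP => [<- v|H]; first by rewrite keyE.
  by apply/ffunP => v; apply: val_inj; rewrite /= keyE (eqP (H v)).
rewrite big_mkcond /Sn; apply: eq_bigr => m _ /=.
by rewrite hk; case: forallP.
Qed.

Lemma bad_dvd (c : {ffun V -> 'I_K.+1}) : ~~ good (fun v => c v) ->
  K %| Sn K (fun v => c v) * (if Qc (fun v => c v) then G (fun v => c v) else 0).
Proof.
move=> hng; case hQ: (Qc _); last by rewrite muln0 dvdn0.
apply: dvdn_mulr; case: (posnP (Sn K (fun v => c v))) => [->|hpos]; first exact: dvdn0.
have hs := Sn_gt0_sum hpos; have := Sn_dvd_gcd hs.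
set g := \big[gcdn/0]_w _.
have gc : forall v, g %| c v by move=> v; move: (dvdnn g); rewrite {2}/g => /dvdn_biggcdP; apply.
have i0 : 'I_N by exact: Ordinal hN.
have gp : g %| p.
  move/forallP: hQ => /(_ i0) /eqP <-; apply: dvdn_sum => v _; exact: dvdn_mulr.
case/primeP: hp => _ /(_ g gp) /orP [/eqP ->|/eqP gP]; first by rewrite mul1n.
by case/negP: hng; apply/forallP => v; have := gc v; rewrite gP.
Qed.

Lemma split_sum :
  \sum_(c : {ffun V -> 'I_K.+1})
      Sn K (fun v => c v) * (if Qc (fun v => c v) then G (fun v => c v) else 0)
  = GS + \sum_(c : {ffun V -> 'I_K.+1} | ~~ good (fun v => c v))
      Sn K (fun v => c v) * (if Qc (fun v => c v) then G (fun v => c v) else 0).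
Proof.
rewrite (bigID (fun c : {ffun V -> 'I_K.+1} => good (fun v => c v))) /=; congr (_ + _).
rewrite /GS /Pc big_mkcond [in RHS]big_mkcond; apply: eq_bigr => c _.
case: ifP => hg //=; case: ifP => hQ /=; last by rewrite muln0.
case: eqP => // hs; case: (posnP (Sn K (fun v => c v))) => [->//|/Sn_gt0_sum] //.
Qed.

Lemma main_mod :
  \sum_(m : {ffun 'I_K -> V} | [forall i, \sum_(j < K) (m j i : nat) == p])
     \prod_(j < K) f [ffun i => (m j i : nat)]
  = \sum_(1 <= k < n.+1)
     ((K`! %/ ((p`!) ^ k * (p * (n - k))`!))
       * f [ffun _ => 0] ^ (p * (n - k)) * vpart_sum k (hfun p f)) %[mod K].
Proof.
rewrite LHS_eq split_sum RHS_eq -GS_eq -modnDmr.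
have /eqP -> : (\sum_(c : {ffun V -> 'I_K.+1} | ~~ good (fun v => c v))
      Sn K (fun v => c v) * (if Qc (fun v => c v) then G (fun v => c v) else 0)) %% K == 0.
  by rewrite -/(dvdn _ _); apply: dvdn_sum => c; exact: bad_dvd.
by rewrite addn0.
Qed.

End Main.
Theorem theorem12 (N : nat) (f : vec N -> nat) (p n : nat) :
  0 < N -> prime p -> 0 < n ->
  binomf f (p * n) [ffun _ => p] =
  \sum_(1 <= k < n.+1)
     ((p * n)`! %/ ((p`!) ^ k * (p * (n - k))`!))
       * f [ffun _ => 0] ^ (p * (n - k)) * vpart_sum k (hfun p f)
  %[mod p * n].
Proof.
move=> hN hp hn; rewrite /binomf.
set B := \max_(i < N) [ffun _ => p] i.
have hB : 0 < B.
  apply: leq_trans (leq_bigmax (Ordinal hN)); rewrite ffunE; exact: prime_gt0.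
rewrite (eq_bigl (fun m : {ffun 'I_(p * n) -> {ffun 'I_N -> 'I_B.+1}} =>
           [forall i, \sum_(j < p * n) (m j i : nat) == p])); last first.
  by move=> m; apply: eq_forallb => i; rewrite ffunE.
exact: main_mod.
Qed.
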